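(* Let $G$ be a graph in which every edge is part of at most two triangles, and for a state $s$ (a $\pm1$ labeling of the edges of $G$) let $P(s)$ be the number of imbalanced triangles of $G$ in $s$. Then $P$ is nonincreasing along the nondeterministic triad dynamics: if $s\rightarrow t$ is a legal transition, then $P(s)\geq P(t)$.
   Context: A triangle is balanced if the product of its three edge labels is $1$, imbalanced otherwise. Nondeterministic triad dynamics: a legal transition consists of choosing an imbalanced triangle $T$ and changing the sign of one edge of $T$. *)

(* Defs.v *)
From mathcomp Require Import all_boot all_order all_algebra.
Set Implicit Arguments. Unset Strict Implicit. Unset Printing Implicit Defensive.
Import GRing.Theory Num.Theory.
Local Open Scope ring_scope.

Definition simple_graph (V : finType) (adj : rel V) : Prop :=
  symmetric adj /\ irreflexive adj.

Definition is_edge (V : finType) (adj : rel V) (e : {set V}) : bool :=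
  [exists x, exists y, adj x y && (e == [set x; y])].

Definition is_triangle (V : finType) (adj : rel V) (T : {set V}) : bool :=
  [exists x, exists y, exists z,
     [&& adj x y, adj y z, adj x z & T == [set x; y; z]]].

Definition triangles (V : finType) (adj : rel V) : {set {set V}} :=
  [set T | is_triangle adj T].

Definition edge_of (V : finType) (adj : rel V) (e T : {set V}) : bool :=
  is_edge adj e && (e \subset T).

(* A state: a +-1 labeling of the edges (values off edges are irrelevant). *)
Definition state (V : finType) (adj : rel V) (s : {set V} -> int) : Prop :=
  forall e, is_edge adj e -> s e = 1 \/ s e = -1.

Definition tri_prod (V : finType) (adj : rel V) (s : {set V} -> int)
  (T : {set V}) : int :=
  \prod_(e : {set V} | edge_of adj e T) s e.

Definition imbalanced (V : finType) (adj : rel V) (s : {set V} -> int)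
  (T : {set V}) : bool :=
  is_triangle adj T && (tri_prod adj s T != 1).

Definition P (V : finType) (adj : rel V) (s : {set V} -> int) : nat :=
  #|[set T | imbalanced adj s T]|.

Definition flip (V : finType) (s : {set V} -> int) (e : {set V})
  : {set V} -> int :=
  fun f => if f == e then - s f else s f.

Definition legal_transition (V : finType) (adj : rel V)
  (s t : {set V} -> int) : Prop :=
  exists T e, imbalanced adj s T /\ edge_of adj e T /\ t = flip s e.

Definition at_most_two_triangles (V : finType) (adj : rel V) : Prop :=
  forall e, is_edge adj e -> (#|[set T in triangles adj | e \subset T]| <= 2)%N.

(* Main.v *)
Require Import Defs.
From mathcomp Require Import all_boot all_order all_algebra.
Import GRing.Theory Num.Theory.
Local Open Scope ring_scope.

Lemma tri_prod_flip_out (V : finType) (adj : rel V) (s : {set V} -> int) (e X : {set V}) :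
  ~~ (e \subset X) -> tri_prod adj (flip s e) X = tri_prod adj s X.
Proof.
move=> neX; apply: eq_bigr => f /andP[_ fX].
rewrite /flip; case: eqP => // fe; by rewrite -fe fX in neX.
Qed.

Lemma tri_prod_flip_in (V : finType) (adj : rel V) (s : {set V} -> int) (e X : {set V}) :
  edge_of adj e X -> tri_prod adj (flip s e) X = - tri_prod adj s X.
Proof.
move=> eX; rewrite /tri_prod (bigD1 e eX) [in RHS](bigD1 e eX) /= /flip eqxx.
rewrite mulNr; congr (- (_ * _)); apply: eq_bigr => f /andP[_ /negbTE ->] //.
Qed.

Lemma tri_prod_pm (V : finType) (adj : rel V) (s : {set V} -> int) (X : {set V}) :
  state adj s -> (tri_prod adj s X == 1) || (tri_prod adj s X == -1).
Proof.
move=> st; apply: (big_ind (fun x : int => (x == 1) || (x == -1))).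
- by rewrite eqxx.
- move=> x y /orP[] /eqP -> /orP[] /eqP ->; by rewrite ?mulr1 ?mulN1r ?opprK ?eqxx ?orbT.
- move=> f /andP[ef _]; case: (st f ef) => ->; by rewrite eqxx ?orbT.
Qed.

Theorem lemma2 (V : finType) (adj : rel V) (s t : {set V} -> int) :
  simple_graph adj -> at_most_two_triangles adj -> state adj s ->
  legal_transition adj s t -> (P adj t <= P adj s)%N.
Proof.
move=> _ two st [T [e [imT [eT ->]]]].
set S := [set X in triangles adj | e \subset X].
have TS : T \in S.
  by rewrite !inE; case/andP: imT => -> _; case/andP: eT => _ ->.
have cS : (#|S| <= 2)%N by apply: two; case/andP: eT.
rewrite /P -(cardsID S [set X | imbalanced adj (flip s e) X])
  -(cardsID S [set X | imbalanced adj s X]).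
have -> : [set X | imbalanced adj (flip s e) X] :\: S
          = [set X | imbalanced adj s X] :\: S.
  apply/setP => X; rewrite !inE /imbalanced.
  case tX: (is_triangle adj X); rewrite ?andbF //=.
  case eX: (e \subset X) => //=; by rewrite tri_prod_flip_out ?eX.
rewrite leq_add2r.
have h1 : (1 <= #|[set X | imbalanced adj s X] :&: S|)%N.
  by rewrite card_gt0; apply/set0Pn; exists T; rewrite inE TS andbT inE imT.
apply: (leq_trans _ h1).
have sub : [set X | imbalanced adj (flip s e) X] :&: S \subset S :\ T.
  apply/subsetP => X; rewrite !inE => /andP[/andP[_ imX] XS].
  rewrite XS andbT; apply/eqP => XT; move: imX; rewrite XT.
  rewrite tri_prod_flip_in //; case/andP: imT => _.
  by case/orP: (@tri_prod_pm _ adj s T st) => /eqP ->; rewrite ?eqxx ?opprK.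
apply: leq_trans (subset_leq_card sub) _.
move: cS; rewrite (cardsD1 T S) TS; by case: #|S :\ T|  => [|[|]].
Qed.
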